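(* Let $D=(V,A)$ be a digraph with minimum dicut size $\tau$ and let $k\ge 2$ be rational. If the underlying undirected graph $G$ of $D$ admits a nowhere-zero circular $k$-flow, then the digraph $\vec G=(V,A\cup A^{-1})$ with weight $w^D$ can pack two $\lfloor\tau/k\rfloor$-SCD's; i.e., there exist integral vectors $x^1,x^2\in\mathbb{Z}_{\ge0}^{A\cup A^{-1}}$ with $x^1+x^2\le w^D$ (in fact one may take $x^1+x^2=w^D$) such that $x^i(\delta^+_{\vec G}(U))\ge\lfloor\tau/k\rfloor$ for $i=1,2$ and all $\emptyset\neq U\subsetneq V$.
   Context: Digraphs/graphs are finite and loopless; parallel arcs/edges allowed. For $\emptyset\neq U\subsetneq V$, $\delta^+(U)$ / $\delta^-(U)$ denote arcs leaving/entering $U$. A dicut of $D$ is $\delta^+_D(U)$ with $\emptyset\neq U\subsetneq V$ and $\delta^-_D(U)=\emptyset$; ''$D$ has minimum dicut size $\tau$'' means $D$ has at least one dicut and the minimum number of arcs in a dicut is $\tau$. The underlying undirected graph replaces each arc $(u,v)$ by an edge $\{u,v\}$. $A^{-1}$ denotes the set of reverses $a^{-1}$ of arcs $a\in A$; $\vec G$ has vertex set $V$ and arc set $A\cup A^{-1}$, with weight $w^D_a=\tau$ for $a\in A$ and $w^D_{a^{-1}}=1$. For a positive integer $t$, a $t$-SCD ($t$-strongly-connected digraph) of $\vec G$ is a vector $x\in\mathbb{Z}_{\ge0}^{A\cup A^{-1}}$ with $x(\delta^+_{\vec G}(U))\ge t$ for all $\emptyset\neq U\subsetneq V$, where $x(B)=\sum_{e\in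 B}x_e$. For rational $k\ge2$, a nowhere-zero circular $k$-flow of an undirected graph $G$ is a pair $(E^+,f)$ with $E^+$ an orientation of $G$ and $f:E^+\to[1,k-1]$ real-valued satisfying flow conservation at every vertex. *)

(* Defs.v *)
From HB Require Import structures.
From mathcomp Require Import all_boot all_order all_algebra.
From Stdlib Require Rdefinitions.
From mathcomp Require Import Rstruct.
Set Implicit Arguments. Unset Strict Implicit. Unset Printing Implicit Defensive.
Import Order.TTheory GRing.Theory Num.Theory.

(* A digraph D = (V, A): vertex finType V, arc finType E (parallel arcs allowed),
   each arc e goes from tl e to hd e; loopless means tl e != hd e. *)
Definition loopless (V E : finType) (tl hd : E -> V) : Prop :=
  forall e, tl e != hd e.

Definition delta_out (V E : finType) (tl hd : E -> V) (U : {set V}) : {set E} :=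
  [set e | (tl e \in U) && (hd e \notin U)].
Definition delta_in (V E : finType) (tl hd : E -> V) (U : {set V}) : {set E} :=
  [set e | (tl e \notin U) && (hd e \in U)].

Definition dicut_shore (V E : finType) (tl hd : E -> V) (U : {set V}) : Prop :=
  U != set0 /\ U != setT /\ delta_in tl hd U = set0.

Definition min_dicut_size (V E : finType) (tl hd : E -> V) (tau : nat) : Prop :=
  (exists U, dicut_shore tl hd U /\ #|delta_out tl hd U| = tau) /\
  (forall U, dicut_shore tl hd U -> tau <= #|delta_out tl hd U|).

(* Nowhere-zero circular k-flow of the underlying undirected graph G:
   edges of G are the elements of E with endpoints {tl e, hd e};
   an orientation E^+ is given by o : E -> bool (o e = true : oriented tl e -> hd e,
   o e = false : oriented hd e -> tl e); f : E -> R takes values in [1, k-1]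
   and satisfies flow conservation at every vertex. *)
Definition or_tail (V E : finType) (tl hd : E -> V) (o : E -> bool) (e : E) : V :=
  if o e then tl e else hd e.
Definition or_head (V E : finType) (tl hd : E -> V) (o : E -> bool) (e : E) : V :=
  if o e then hd e else tl e.

Definition nz_circular_flow (V E : finType) (tl hd : E -> V) (k : rat)
    (o : E -> bool) (f : E -> Rdefinitions.R) : Prop :=
  (forall e, (1 <= f e)%R /\ (f e <= ratr k - 1)%R) /\
  (forall v : V, (\sum_(e | or_head tl hd o e == v) f e
                  = \sum_(e | or_tail tl hd o e == v) f e)%R).

Definition has_nz_circular_flow (V E : finType) (tl hd : E -> V) (k : rat) : Prop :=
  exists (o : E -> bool) (f : E -> Rdefinitions.R), nz_circular_flow tl hd k o f.

(* The digraph vec G = (V, A u A^{-1}): its arcs are (E + E), inl e = the arc e,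
   inr e = its reverse e^{-1} (going from hd e to tl e). *)
Definition sym_tl (V E : finType) (tl hd : E -> V) (a : E + E) : V :=
  match a with inl e => tl e | inr e => hd e end.
Definition sym_hd (V E : finType) (tl hd : E -> V) (a : E + E) : V :=
  match a with inl e => hd e | inr e => tl e end.

Definition wD (E : finType) (tau : nat) (a : E + E) : nat :=
  match a with inl _ => tau | inr _ => 1 end.

Definition sym_delta_out (V E : finType) (tl hd : E -> V) (U : {set V}) : {set E + E} :=
  [set a | (sym_tl tl hd a \in U) && (sym_hd tl hd a \notin U)].

Definition is_SCD (V E : finType) (tl hd : E -> V) (t : int) (x : {ffun E + E -> nat}) : Prop :=
  forall U : {set V}, U != set0 -> U != setT ->
    (t <= (\sum_(a in sym_delta_out tl hd U) x a)%:Z)%R.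

(* Main.v *)
Require Import Defs.
From HB Require Import structures.
From mathcomp Require Import all_boot all_order all_algebra.
From Stdlib Require Rdefinitions.
From mathcomp Require Import Rstruct.
From mathcomp Require Import zify ring lra.
Import Order.TTheory GRing.Theory Num.Theory.

Local Notation RR := Rdefinitions.R.

Lemma sum_part (I J : finType) (h : I -> J) (U : {set J}) (F : I -> RR) :
  (\sum_(v in U) \sum_(e | h e == v) F e = \sum_(e | h e \in U) F e)%R.
Proof.
symmetry; rewrite (partition_big h (fun j => j \in U)) //=.
apply: eq_bigr => v vU; apply: eq_bigl => e.
by case: eqP => [->|]; rewrite ?vU ?andbF.
Qed.

Lemma flow_cut (V E : finType) (tl hd : E -> V) (k : rat) o f (U : {set V}) :
  nz_circular_flow tl hd k o f ->
  (forall e, tl e \in U -> hd e \in U) ->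
  (\sum_(e in delta_in tl hd U :&: [set e | o e]) f e =
   \sum_(e in delta_in tl hd U :\: [set e | o e]) f e)%R.
Proof.
move=> [_ cons] cl.
have H : (\sum_(v in U) \sum_(e | or_head tl hd o e == v) f e =
          \sum_(v in U) \sum_(e | or_tail tl hd o e == v) f e)%R.
  by apply: eq_bigr => v _; exact: cons.
rewrite !sum_part in H.
rewrite (bigID (fun e => or_tail tl hd o e \in U)) /= in H.
rewrite [X in _ = X](bigID (fun e => or_head tl hd o e \in U)) /= in H.
rewrite [X in _ = (X + _)%R](eq_bigl (fun e => (or_head tl hd o e \in U) && (or_tail tl hd o e \in U))) in H; last first.
  by move=> e; rewrite andbC.
move/addrI: H => H.
have -> : (\sum_(e in delta_in tl hd U :&: [set e | o e]) f e =
   \sum_(e | (or_head tl hd o e \in U) && ~~ (or_tail tl hd o e \in U)) f e)%R.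
  apply: eq_bigl => e; rewrite !inE /or_head /or_tail.
  move: (cl e); case: (o e); case: (tl e \in U); case: (hd e \in U) => //=.
  by move=> /(_ isT).
rewrite H; apply: eq_bigl => e; rewrite !inE /or_head /or_tail.
move: (cl e); case: (o e); case: (tl e \in U); case: (hd e \in U) => //=.
by move=> /(_ isT).
Qed.

Lemma flow_bound (V E : finType) (tl hd : E -> V) (k : rat) o f (U : {set V})
    (tau : nat) (C S1 S2 : {set E}) :
  nz_circular_flow tl hd k o f ->
  (2%:R <= k)%R ->
  C = delta_in tl hd U ->
  S1 = C :&: [set e | o e] -> S2 = C :\: [set e | o e] ->
  (\sum_(e in S1) f e = \sum_(e in S2) f e)%R ->
  tau <= #|C| ->
  (tau%:R / k <= #|S1|%:R)%R.
Proof.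
move=> [fb _] k2 -> -> -> Hs Htau.
pose a := #|delta_in tl hd U :&: [set e | o e]|; pose b := #|delta_in tl hd U :\: [set e | o e]|.
have hc : (a + b = #|delta_in tl hd U|)%N by rewrite cardsID.
have K2 : (2 <= (ratr k : RR))%R.
  by rewrite -(ratr_nat RR 2) ler_rat.
have ha : (\sum_(e in delta_in tl hd U :&: [set e | o e]) f e <= (ratr k - 1) *+ a)%R.
  rewrite -sumr_const; apply: ler_sum => e _; exact: (fb e).2.
have hb : (b%:R <= \sum_(e in delta_in tl hd U :\: [set e | o e]) f e)%R.
  rewrite -sumr_const; apply: ler_sum => e _; exact: (fb e).1.
rewrite -mulr_natr in ha.
have ht : (tau%:R <= a%:R + b%:R :> RR)%R.
  by rewrite -natrD ler_nat hc.
rewrite -(ler_rat RR) rmorphM fmorphV /= !ratr_nat.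
rewrite ler_pdivrMr; last by lra.
rewrite Hs in ha.
lra.
Qed.

Lemma scd_gen (V E : finType) (tl hd : E -> V) (tau : nat) (t : int) (b : E -> bool) :
  (t <= (tau./2)%:Z)%R ->
  (forall U : {set V}, U != set0 -> U != setT ->
     (forall e, tl e \in U -> hd e \in U) ->
     (t <= #|delta_in tl hd U :&: [set e | b e]|%:Z)%R) ->
  is_SCD tl hd t [ffun a => match a with inl _ => tau./2 | inr e => nat_of_bool (b e) end].
Proof.
move=> ht hU U U0 UT.
rewrite big_sumType /=.
case: (boolP [exists e, (tl e \in U) && (hd e \notin U)]).
  move=> /existsP [e he].
  apply: le_trans ht _; rewrite lez_nat.
  apply: leq_trans (leq_addr _ _).
  rewrite (bigD1 e) /=; last by rewrite inE /=.
  by rewrite ffunE leq_addr.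
move=> /existsPn hn.
have cl : forall e, tl e \in U -> hd e \in U.
  by move=> e he; move: (hn e); rewrite he /= negbK.
apply: le_trans (hU U U0 UT cl) _; rewrite lez_nat.
apply: leq_trans (leq_addl _ _).
rewrite (eq_bigr (fun i => if b i then 1 else 0)); last first.
  by move=> i _; rewrite ffunE; case: (b i).
rewrite -big_mkcondr sum1dep_card.
apply: eq_leq; apply: eq_card => e; rewrite !inE /=.
by rewrite (andbC (hd e \in U)).
Qed.

Theorem theorem4 (V E : finType) (tl hd : E -> V) (tau : nat) (k : rat) :
  loopless tl hd ->
  min_dicut_size tl hd tau ->
  (2%:R <= k)%R ->
  has_nz_circular_flow tl hd k ->
  exists x1 x2 : {ffun E + E -> nat},
    (forall a, x1 a + x2 a <= wD tau a) /\
    is_SCD tl hd (Num.floor (tau%:R / k)%R) x1 /\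
    is_SCD tl hd (Num.floor (tau%:R / k)%R) x2.
Proof.
move=> _ [_ mind] k2 [o [f Hf]].
set t := Num.floor _.
have kpos : (0 < k)%R by apply: lt_le_trans k2; rewrite ltr0n.
have tle : forall a : nat, (tau%:R / k <= a%:R)%R -> (t <= a%:Z)%R.
  move=> a Ha; rewrite -(ler_int rat); apply: le_trans Ha.
  exact: floor_le.
have ht : (t <= (tau./2)%:Z)%R.
  case: (leP t 0) => [t0|tp]; first by lia.
  have h1 : ((t%:~R : rat) * k <= tau%:R)%R.
    by rewrite -ler_pdivlMr //; exact: floor_le.
  have h2 : ((t * 2)%:~R <= (tau%:Z)%:~R :> rat)%R.
    rewrite intrM /=.
    have tp' : (0 <= (t%:~R : rat))%R by rewrite ler0z; lia.
    apply: le_trans h1; exact: ler_wpM2l.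
  rewrite ler_int in h2; lia.
have key : forall U : {set V}, U != set0 -> U != setT ->
     (forall e, tl e \in U -> hd e \in U) ->
     tau <= #|delta_in tl hd U|.
  move=> U U0 UT cl.
  have -> : delta_in tl hd U = delta_out tl hd (~: U).
    by apply/setP => e; rewrite !inE negbK andbC.
  apply: mind; split; [|split].
  - apply/negP => /eqP h; move: UT; by rewrite -[U]setCK h setC0 eqxx.
  - apply/negP => /eqP h; move: U0; by rewrite -[U]setCK h setCT eqxx.
  - apply/setP => e; rewrite !inE negbK; apply/negbTE.
    by apply/negP => /andP [h1 h2]; move: (cl e h1); rewrite (negbTE h2).
exists [ffun a => match a with inl _ => tau./2 | inr e => nat_of_bool (o e) end].
exists [ffun a => match a with inl _ => tau./2 | inr e => nat_of_bool (~~ o e) end].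
split; [|split].
- case=> e; rewrite !ffunE /=; first by lia.
  by case: (o e).
- apply: scd_gen => // U U0 UT cl; apply: tle.
  apply: (@flow_bound V E tl hd k o f U tau (delta_in tl hd U) _
          (delta_in tl hd U :\: [set e | o e])) => //.
  + exact: (@flow_cut V E tl hd k o f U Hf cl).
  + exact: (key U U0 UT cl).
- apply: scd_gen => // U U0 UT cl; apply: tle.
  have -> : delta_in tl hd U :&: [set e | ~~ o e] = delta_in tl hd U :\: [set e | o e].
    by apply/setP => e; rewrite !inE andbC.
  have Hf' : nz_circular_flow tl hd k (fun e => ~~ o e) f.
    case: Hf => fb cons; split => // v.
    rewrite /or_head /or_tail in cons *.
    transitivity (\sum_(e | (if o e then tl e else hd e) == v) f e)%R.
      by apply: eq_bigl => e; case: (o e).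
    by rewrite -cons; apply: eq_bigl => e; case: (o e).
  apply: (@flow_bound V E tl hd k (fun e => ~~ o e) f U tau (delta_in tl hd U) _
          (delta_in tl hd U :\: [set e | ~~ o e])) => //.
  + apply/setP => e; rewrite !inE; by case: (o e); rewrite ?andbF ?andbT.
  + rewrite -(@flow_cut V E tl hd k (fun e => ~~ o e) f U Hf' cl).
    apply: eq_bigl => e; rewrite !inE; by case: (o e); rewrite ?andbT ?andbF.
  + exact: (key U U0 UT cl).
Qed.
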